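(* Let $A,B\in\mathbb{R}^{N\times N}$ and $T>0$, and assume that $1$ is not an eigenvalue of $e^{T(A+B)}$ (i.e. $1$ is not a Floquet multiplier of $u'(t)=(A+B)u(t)$). Then there exists $\tau_0>0$ such that for every $\tau\in(0,\tau_0)$ the delayed system $u'(t)=Au(t)+Bu(t-\tau)$ has no nontrivial $T$-periodic solutions. *)

(* Defs.v *)
(* classical reals. Vectors in R^N are functions nat -> R
   (only indices < N matter); N x N matrices are functions nat -> nat -> R. *)
From Stdlib Require Import Reals Arith.
Open Scope R_scope.

Fixpoint rsum (n : nat) (f : nat -> R) : R :=
  match n with
  | O => 0
  | S m => rsum m f + f m
  end.

Definition idmat (i j : nat) : R := if Nat.eqb i j then 1 else 0.

Definition matmul (N : nat) (M P : nat -> nat -> R) (i j : nat) : R :=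
  rsum N (fun l => M i l * P l j).

Fixpoint matpow (N : nat) (M : nat -> nat -> R) (k : nat) : nat -> nat -> R :=
  match k with
  | O => idmat
  | S k' => matmul N M (matpow N M k')
  end.

Definition is_expm (N : nat) (M E : nat -> nat -> R) : Prop :=
  forall i j, (i < N)%nat -> (j < N)%nat ->
    Un_cv (fun n => rsum (S n) (fun k => matpow N M k i j / INR (fact k))) (E i j).

(* lam is an eigenvalue of E (real eigenvalue; for lam = 1 real and complex
   eigenvectors exist simultaneously since E is real) *)
Definition is_eigenvalue (N : nat) (E : nat -> nat -> R) (lam : R) : Prop :=
  exists v : nat -> R,
    (exists i, (i < N)%nat /\ v i <> 0) /\
    forall i, (i < N)%nat -> rsum N (fun j => E i j * v j) = lam * v i.

Definition periodic (N : nat) (T : R) (u : R -> nat -> R) : Prop :=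
  forall t i, (i < N)%nat -> u (t + T) i = u t i.

Definition solves_dde (N : nat) (A B : nat -> nat -> R) (tau : R)
    (u : R -> nat -> R) : Prop :=
  forall t i, (i < N)%nat ->
    derivable_pt_lim (fun s => u s i) t
      (rsum N (fun j => A i j * u t j) + rsum N (fun j => B i j * u (t - tau) j)).

Definition nontrivial (N : nat) (u : R -> nat -> R) : Prop :=
  exists t i, (i < N)%nat /\ u t i <> 0.

(* Main.v *)
Require Import Defs.
From Stdlib Require Import Reals Lra Lia Psatz ZArith.
From Coquelicot Require Import Coquelicot.
Open Scope R_scope.

Lemma rsum_ext n f g : (forall j, (j < n)%nat -> f j = g j) -> rsum n f = rsum n g.
Proof. induction n; simpl; intros H; auto. rewrite IHn by (intros; apply H; lia). rewrite H by lia; auto. Qed.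

Lemma rsum_plus n f g : rsum n (fun j => f j + g j) = rsum n f + rsum n g.
Proof. induction n; simpl; [lra|]. rewrite IHn; lra. Qed.

Lemma rsum_opp n f : rsum n (fun j => - f j) = - rsum n f.
Proof. induction n; simpl; [lra|]. rewrite IHn; lra. Qed.

Lemma rsum_scal n c f : rsum n (fun j => c * f j) = c * rsum n f.
Proof. induction n; simpl; [lra|]. rewrite IHn; lra. Qed.

Lemma rsum_zero n : rsum n (fun _ => 0) = 0.
Proof. induction n; simpl; [lra|]. rewrite IHn; lra. Qed.

Lemma rsum_swap n m (f : nat -> nat -> R) :
  rsum n (fun i => rsum m (fun j => f i j)) = rsum m (fun j => rsum n (fun i => f i j)).
Proof.
induction n; simpl. rewrite rsum_zero; auto.
rewrite IHn. rewrite <- rsum_plus. auto.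
Qed.

Lemma rsum_bound n f b : (forall j, (j < n)%nat -> Rabs (f j) <= b) -> Rabs (rsum n f) <= INR n * b.
Proof.
induction n; cbn [rsum]; intros H. simpl. rewrite Rabs_R0; lra.
eapply Rle_trans. apply Rabs_triang.
rewrite S_INR. assert (Rabs (f n) <= b) by (apply H; lia).
assert (Rabs (rsum n f) <= INR n * b) by (apply IHn; intros; apply H; lia). lra.
Qed.

Lemma rsum_ge_term n f i : (forall k, (k < n)%nat -> 0 <= f k) -> (i < n)%nat -> f i <= rsum n f.
Proof.
induction n; simpl; intros H Hi. lia.
assert (0 <= rsum n f).
{ clear IHn Hi. induction n; simpl. lra. assert (0 <= f n) by (apply H; lia).
  assert (0 <= rsum n f) by (apply IHn; intros; apply H; lia). lra. }
destruct (Nat.eq_dec i n). subst. lra.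
assert (f i <= rsum n f) by (apply IHn; [intros; apply H; lia| lia]).
assert (0 <= f n) by (apply H; lia). lra.
Qed.

Lemma rsum_nonneg n f : (forall k, (k < n)%nat -> 0 <= f k) -> 0 <= rsum n f.
Proof.
induction n; simpl; intros H. lra.
assert (0 <= f n) by (apply H; lia).
assert (0 <= rsum n f) by (apply IHn; intros; apply H; lia). lra.
Qed.

Lemma rsum_idmat n i w : (i < n)%nat -> rsum n (fun l => idmat i l * w l) = w i.
Proof.
induction n; simpl; intros Hi. lia.
unfold idmat at 2. destruct (Nat.eq_dec i n).
- subst. rewrite Nat.eqb_refl. rewrite (rsum_ext _ _ (fun _ => 0)). rewrite rsum_zero. lra.
  intros j Hj. unfold idmat. replace (Nat.eqb n j) with false. lra. symmetry; apply Nat.eqb_neq; lia.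
- replace (Nat.eqb i n) with false by (symmetry; apply Nat.eqb_neq; auto).
  rewrite IHn by lia. lra.
Qed.

Lemma rsum_idmat_r n j w : (j < n)%nat -> rsum n (fun l => w l * idmat l j) = w j.
Proof.
intros Hj. rewrite <- (rsum_idmat n j w Hj). apply rsum_ext. intros l Hl.
unfold idmat. rewrite Nat.eqb_sym. lra.
Qed.

Lemma rsum_sum_f n f : rsum (S n) f = sum_f_R0 f n.
Proof. induction n. simpl. lra. change (rsum (S (S n)) f) with (rsum (S n) f + f (S n)). rewrite IHn. simpl. auto. Qed.

Lemma derive_rsum n (F F' : nat -> R -> R) x :
  (forall j, (j < n)%nat -> derivable_pt_lim (F j) x (F' j x)) ->
  derivable_pt_lim (fun s => rsum n (fun j => F j s)) x (rsum n (fun j => F' j x)).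
Proof.
induction n; simpl; intros H.
- apply derivable_pt_lim_const.
- apply (derivable_pt_lim_plus (fun s => rsum n (fun j => F j s)) (F n)).
  apply IHn; intros; apply H; lia. apply H; lia.
Qed.

Lemma matmul_assoc N X Y Z i j :
  matmul N (matmul N X Y) Z i j = matmul N X (matmul N Y Z) i j.
Proof.
unfold matmul.
rewrite (rsum_ext N _ (fun l => rsum N (fun k => X i k * Y k l * Z l j))).
2:{ intros l _. rewrite Rmult_comm, <- rsum_scal. apply rsum_ext; intros; ring. }
rewrite rsum_swap. apply rsum_ext; intros k _. rewrite <- rsum_scal. apply rsum_ext; intros; ring.
Qed.

Lemma matpow_S_r N M k i j : (i < N)%nat -> (j < N)%nat ->
  matpow N M (S k) i j = matmul N (matpow N M k) M i j.
Proof.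
revert i j; induction k; intros i j Hi Hj.
- simpl. unfold matmul. rewrite rsum_idmat_r by auto. rewrite rsum_idmat by auto. auto.
- change (matpow N M (S (S k)) i j) with (matmul N M (matpow N M (S k)) i j).
  unfold matmul at 1. rewrite (rsum_ext N _ (fun l => M i l * matmul N (matpow N M k) M l j)).
  2:{ intros l Hl. rewrite IHk by auto. auto. }
  change (rsum N (fun l => M i l * matmul N (matpow N M k) M l j)) with
   (matmul N M (matmul N (matpow N M k) M) i j).
  rewrite <- matmul_assoc. reflexivity.
Qed.

Lemma matpow_scale N M c k i j :
  matpow N (fun a b => c * M a b) k i j = c ^ k * matpow N M k i j.
Proof.
revert i j; induction k; intros i j; simpl. ring.
unfold matmul. rewrite <- !rsum_scal. apply rsum_ext; intros l _. rewrite IHk. ring.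
Qed.

Lemma matpow_bound N M m k i j : 0 <= m -> (forall a b, (a < N)%nat -> (b < N)%nat -> Rabs (M a b) <= m) ->
  (i < N)%nat -> (j < N)%nat -> Rabs (matpow N M k i j) <= (INR N * m) ^ k.
Proof.
intros Hm HM. revert i j; induction k; intros i j Hi Hj; simpl.
- unfold idmat. destruct (Nat.eqb i j); rewrite ?Rabs_R1, ?Rabs_R0; lra.
- unfold matmul. eapply Rle_trans. apply rsum_bound with (b := m * (INR N * m) ^ k).
  intros l Hl. rewrite Rabs_mult. apply Rmult_le_compat; auto using Rabs_pos.
  right; ring.
Qed.

Definition expa N M i j (k : nat) : R := matpow N M k i j / INR (Factorial.fact k).
Definition Phi N M r i j := PSeries (expa N M i j) r.

Definition mbound N (M : nat -> nat -> R) := rsum N (fun a => rsum N (fun b => Rabs (M a b))).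

Lemma mbound_ok N M a b : (a < N)%nat -> (b < N)%nat -> Rabs (M a b) <= mbound N M.
Proof.
intros Ha Hb. unfold mbound.
eapply Rle_trans; [| apply rsum_ge_term with (i := a); auto].
- apply rsum_ge_term with (f := fun b => Rabs (M a b)); auto. intros; apply Rabs_pos.
- intros k _. apply rsum_nonneg. intros; apply Rabs_pos.
Qed.

Lemma mbound_pos N M : 0 <= mbound N M.
Proof. apply rsum_nonneg; intros; apply rsum_nonneg; intros; apply Rabs_pos. Qed.

Lemma expa_CV_disk N M i j r : (i < N)%nat -> (j < N)%nat -> CV_disk (expa N M i j) r.
Proof.
intros Hi Hj. unfold CV_disk.
set (m := mbound N M). set (x := INR N * m * Rabs r).
apply (@ex_series_le R_AbsRing R_CompleteNormedModule) with (b := fun n => / INR (Factorial.fact n) * x ^ n).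
- intros n. change (norm (Rabs (expa N M i j n * r ^ n))) with (Rabs (Rabs (expa N M i j n * r ^ n))).
  rewrite Rabs_Rabsolu. unfold expa, Rdiv. rewrite !Rabs_mult, Rabs_inv, <- RPow_abs.
  rewrite (Rabs_right (INR (Factorial.fact n))) by (apply Rle_ge, Rlt_le, INR_fact_lt_0).
  unfold x. rewrite Rpow_mult_distr.
  assert (H1 := matpow_bound N M m n i j (mbound_pos N M) (mbound_ok N M) Hi Hj).
  assert (0 < / INR (Factorial.fact n)) by (apply Rinv_0_lt_compat, INR_fact_lt_0).
  assert (0 <= Rabs r ^ n) by (apply pow_le, Rabs_pos).
  assert (0 <= Rabs (matpow N M n i j)) by apply Rabs_pos.
  replace (/ INR (Factorial.fact n) * ((INR N * m) ^ n * Rabs r ^ n)) with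
    ((INR N * m) ^ n * / INR (Factorial.fact n) * Rabs r ^ n) by ring.
  apply Rmult_le_compat_r; [lra|]. apply Rmult_le_compat_r; lra.
- assert (H := is_exp_Reals x). apply ex_series_ext with (a := fun k => scal (pow_n x k) (/ INR (Factorial.fact k))).
  intros n. change (scal (pow_n x n) (/ INR (Factorial.fact n))) with (pow_n x n * / INR (Factorial.fact n)).
  rewrite pow_n_pow; apply Rmult_comm.
  eexists; exact H.
Qed.

Lemma expa_radius N M i j x : (i < N)%nat -> (j < N)%nat -> Rbar_lt (Rabs x) (CV_radius (expa N M i j)).
Proof.
intros Hi Hj. apply Rbar_lt_le_trans with (y := Finite (Rabs x + 1)). simpl; lra.
unfold CV_radius. destruct (Lub_Rbar_correct (CV_disk (expa N M i j))) as [Hub _].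
apply Hub. apply expa_CV_disk; auto.
Qed.

Lemma expa_ex N M i j x : (i < N)%nat -> (j < N)%nat -> ex_pseries (expa N M i j) x.
Proof. intros; apply CV_radius_inside, expa_radius; auto. Qed.

Lemma PSeries_rsum n (c : nat -> R) (b : nat -> nat -> R) x :
  (forall l, (l < n)%nat -> ex_pseries (b l) x) ->
  ex_pseries (fun k => rsum n (fun l => c l * b l k)) x /\
  PSeries (fun k => rsum n (fun l => c l * b l k)) x = rsum n (fun l => c l * PSeries (b l) x).
Proof.
induction n; intros H.
- simpl. split. apply ex_pseries_ext with (a := fun _ => 0). auto.
  apply (CV_disk_correct (fun _ => 0) x). unfold CV_disk.
  apply ex_series_ext with (a := fun _ => 0). intros; rewrite Rmult_0_l, Rabs_R0; auto.
  exists 0. apply is_series_Reals. unfold infinite_sum. intros eps Heps. exists 0%nat. intros n0 _.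
  unfold R_dist. rewrite (sum_eq_R0 _ n0) by auto. rewrite Rminus_0_r, Rabs_R0; lra.
  apply PSeries_const_0.
- destruct IHn as [He Heq]. intros; apply H; lia.
  assert (Hb := H n (Nat.lt_succ_diag_r n)).
  assert (E1 : forall k, rsum (S n) (fun l => c l * b l k) = PS_plus (fun k => rsum n (fun l => c l * b l k)) (PS_scal (c n) (b n)) k).
  { intros k. unfold PS_plus, PS_scal. simpl. reflexivity. }
  split.
  + eapply ex_pseries_ext. intros k; symmetry; apply E1.
    apply ex_pseries_plus; auto. apply ex_pseries_scal; auto. apply Rmult_comm.
  + rewrite (PSeries_ext _ _ x E1). rewrite PSeries_plus; auto.
    rewrite PSeries_scal. simpl. rewrite Heq. auto.
    apply ex_pseries_scal; auto. apply Rmult_comm.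
Qed.

Lemma Phi_0 N M i j : Phi N M 0 i j = idmat i j.
Proof. unfold Phi. rewrite PSeries_0. unfold expa. simpl. field. Qed.

Lemma Phi_deriv N M r i j : (i < N)%nat -> (j < N)%nat ->
  derivable_pt_lim (fun s => Phi N M s i j) r (rsum N (fun l => Phi N M r i l * M l j)).
Proof.
intros Hi Hj. apply is_derive_Reals. unfold Phi.
assert (H := is_derive_PSeries (expa N M i j) r (expa_radius N M i j r Hi Hj)).
replace (rsum N (fun l => PSeries (expa N M i l) r * M l j)) with (PSeries (PS_derive (expa N M i j)) r). exact H.
rewrite (PSeries_ext _ (fun k => rsum N (fun l => M l j * expa N M i l k))).
- rewrite (proj2 (PSeries_rsum N (fun l => M l j) (fun l => expa N M i l) r (fun l Hl => expa_ex N M i l r Hi Hl))).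
  apply rsum_ext; intros; ring.
- intros k. unfold PS_derive, expa.
  rewrite matpow_S_r by auto. unfold matmul.
  change (Factorial.fact (S k)) with (S k * Factorial.fact k)%nat. rewrite mult_INR.
  rewrite (rsum_ext N (fun l => M l j * (matpow N M k i l / INR (Factorial.fact k))) (fun l => / INR (Factorial.fact k) * (matpow N M k i l * M l j))).
  2: intros; unfold Rdiv; ring.
  rewrite rsum_scal.
  assert (0 < INR (S k)) by (apply lt_0_INR; lia).
  assert (0 < INR (Factorial.fact k)) by apply INR_fact_lt_0.
  field. split; lra.
Qed.

Lemma Phi_expm N M T : is_expm N (fun i j => T * M i j) (fun i j => Phi N M T i j).
Proof.
intros i j Hi Hj.
assert (H := PSeries_correct _ _ (expa_ex N M i j T Hi Hj)).
unfold is_pseries in H. apply is_series_Reals in H.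
intros eps Heps. destruct (H eps Heps) as [K HK]. exists K. intros n Hn.
specialize (HK n Hn). unfold Phi.
replace (rsum (S n) (fun k => matpow N (fun i0 j0 => T * M i0 j0) k i j / INR (Factorial.fact k)))
  with (sum_f_R0 (fun k : nat => scal (pow_n T k) (expa N M i j k)) n). exact HK.
rewrite <- rsum_sum_f. apply rsum_ext. intros k _.
change (scal (pow_n T k) (expa N M i j k)) with (pow_n T k * expa N M i j k).
rewrite pow_n_pow, matpow_scale. unfold expa, Rdiv. ring.
Qed.

Lemma bound_finite n (P : nat -> R -> Prop) :
  (forall k K K', K <= K' -> P k K -> P k K') ->
  (forall k, (k < n)%nat -> exists K, P k K) -> exists K, forall k, (k < n)%nat -> P k K.
Proof.
intros Hmon. induction n; intros H.
- exists 0. intros; lia.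
- destruct IHn as [K1 HK1]. intros; apply H; lia.
  destruct (H n ltac:(lia)) as [K2 HK2].
  exists (Rmax K1 K2). intros k Hk. destruct (Nat.eq_dec k n).
  + subst. apply Hmon with K2; auto. apply Rmax_r.
  + apply Hmon with K1. apply Rmax_l. apply HK1; lia.
Qed.

Lemma compact_bound f a b : a <= b -> (forall r, a <= r <= b -> continuity_pt f r) ->
  exists K, forall r, a <= r <= b -> Rabs (f r) <= K.
Proof.
intros Hab Hc. destruct (continuity_ab_maj (fun r => Rabs (f r)) a b Hab) as [x [Hx _]].
- intros r Hr. exact (continuity_pt_comp f Rabs r (Hc r Hr) (Rcontinuity_abs (f r))).
- exists (Rabs (f x)). auto.
Qed.

Lemma Phi_bound N M T : 0 <= T -> exists K, forall i j r, (i < N)%nat -> (j < N)%nat -> 0 <= r <= T ->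
  Rabs (Phi N M r i j) <= K.
Proof.
intros HT.
destruct (bound_finite N (fun i K => forall j, (j < N)%nat -> forall r, 0 <= r <= T -> Rabs (Phi N M r i j) <= K)) as [K HK].
- intros k K K' HK H j Hj r Hr. eapply Rle_trans; [apply H|]; auto.
- intros i Hi. apply (bound_finite N (fun j K => forall r, 0 <= r <= T -> Rabs (Phi N M r i j) <= K)).
  + intros k K K' HK H r Hr. eapply Rle_trans; [apply H|]; auto.
  + intros j Hj. apply compact_bound; auto. intros r _.
    apply derivable_continuous_pt. eexists. apply Phi_deriv; auto.
- exists K. intros; apply HK; auto.
Qed.

Lemma argmax_finite n (g : nat -> R -> R) : (0 < n)%nat ->
  (forall j, (j < n)%nat -> exists t, forall s, g j s <= g j t) ->
  exists j t, (j < n)%nat /\ forall k s, (k < n)%nat -> g k s <= g j t.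
Proof.
induction n; intros Hn H. lia.
destruct (H n ltac:(lia)) as [tn Htn].
destruct (Nat.eq_dec n 0).
- subst. exists 0%nat, tn. split. lia. intros k s Hk. replace k with 0%nat by lia. auto.
- destruct IHn as [j [t [Hj Ht]]]. lia. intros; apply H; lia.
  destruct (Rle_dec (g j t) (g n tn)).
  + exists n, tn. split. lia. intros k s Hk. destruct (Nat.eq_dec k n). subst; auto.
    eapply Rle_trans; [apply Ht; lia| auto].
  + exists j, t. split. lia. intros k s Hk. destruct (Nat.eq_dec k n). subst.
    eapply Rle_trans; [apply Htn| lra]. apply Ht; lia.
Qed.

Lemma periodic_nat N T u : periodic N T u -> forall n t j, (j < N)%nat -> u (t + INR n * T) j = u t j.
Proof.
intros Hp n. induction n; intros t j Hj. simpl. rewrite Rmult_0_l, Rplus_0_r; auto.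
rewrite S_INR. replace (t + (INR n + 1) * T) with ((t + INR n * T) + T) by ring.
rewrite Hp by auto. apply IHn; auto.
Qed.

Lemma periodic_reduce N T u : 0 < T -> periodic N T u -> forall t, exists t', 0 <= t' <= T /\
  forall j, (j < N)%nat -> u t j = u t' j.
Proof.
intros HT Hp t. destruct (archimed (t / T)) as [H1 H2].
set (z := (up (t / T) - 1)%Z).
assert (Hz : IZR z <= t / T < IZR z + 1) by (unfold z; rewrite minus_IZR; lra).
assert (Hz2 : IZR z * T <= t < IZR z * T + T).
{ destruct Hz as [Ha Hb]. split.
  - apply (Rmult_le_compat_r T) in Ha; [|lra]. unfold Rdiv in Ha. rewrite Rmult_assoc, Rinv_l, Rmult_1_r in Ha; lra.
  - apply (Rmult_lt_compat_r T) in Hb; auto. unfold Rdiv in Hb. rewrite Rmult_assoc, Rinv_l, Rmult_1_r in Hb; lra. }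
exists (t - IZR z * T). split. lra.
intros j Hj. destruct (Z_le_dec 0 z).
- rewrite <- (periodic_nat N T u Hp (Z.to_nat z) (t - IZR z * T) j Hj).
  rewrite INR_IZR_INZ, Z2Nat.id by auto. f_equal. ring.
- rewrite <- (periodic_nat N T u Hp (Z.to_nat (- z)) t j Hj).
  rewrite INR_IZR_INZ, Z2Nat.id by lia. rewrite opp_IZR. f_equal. ring.
Qed.

Lemma deriv_shift f a s l : derivable_pt_lim f (a + s) l -> derivable_pt_lim (fun s => f (a + s)) s l.
Proof.
intros H. replace l with (l * 1) by ring.
apply (derivable_pt_lim_comp (fun s => a + s) f s 1 l); auto.
replace 1 with (0 + 1) by ring. apply derivable_pt_lim_plus. apply derivable_pt_lim_const. apply derivable_pt_lim_id.
Qed.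

Lemma deriv_refl f a s l : derivable_pt_lim f (a - s) l -> derivable_pt_lim (fun s => f (a - s)) s (l * -1).
Proof.
intros H.
apply (derivable_pt_lim_comp (fun s => a - s) f s (-1) l); auto.
replace (-1) with (0 - 1) by ring. apply derivable_pt_lim_minus. apply derivable_pt_lim_const. apply derivable_pt_lim_id.
Qed.

Lemma abs_mult_le a b x y : Rabs a <= x -> Rabs b <= y -> Rabs (a * b) <= x * y.
Proof.
intros Ha Hb. rewrite Rabs_mult. apply Rmult_le_compat; auto using Rabs_pos.
Qed.

Lemma gprime_simpl N (Ph : nat -> R) (A B : nat -> nat -> R) (v w : nat -> R) :
  rsum N (fun l => (rsum N (fun k => A l k * v k) + rsum N (fun k => B l k * w k)) * Ph l
      + (rsum N (fun k => Ph k * (A k l + B k l)) * -1) * v l)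
  = rsum N (fun l => Ph l * rsum N (fun k => B l k * (w k - v k))).
Proof.
rewrite rsum_plus.
rewrite (rsum_ext N (fun l => rsum N (fun k => Ph k * (A k l + B k l)) * -1 * v l)
  (fun l => rsum N (fun k => - (Ph k * (A k l * v l + B k l * v l))))).
2:{ intros l _. rewrite rsum_opp.
  rewrite (rsum_ext N (fun k => Ph k * (A k l * v l + B k l * v l)) (fun k => v l * (Ph k * (A k l + B k l)))) by (intros; ring).
  rewrite rsum_scal. ring. }
rewrite rsum_swap.
rewrite (rsum_ext N (fun k => rsum N (fun l => - (Ph k * (A k l * v l + B k l * v l))))
  (fun k => Ph k * (- (rsum N (fun l => A k l * v l) + rsum N (fun l => B k l * v l))))).
2:{ intros k _. rewrite rsum_opp, <- rsum_plus.
  replace (Ph k * - rsum N (fun j => A k j * v j + B k j * v j)) with (- (Ph k * rsum N (fun j => A k j * v j + B k j * v j))) by ring.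
  rewrite <- rsum_scal. f_equal; try (apply rsum_ext; intros; ring). }
rewrite <- rsum_plus. apply rsum_ext. intros l _.
rewrite (rsum_ext N (fun k => B l k * (w k - v k)) (fun k => B l k * w k + - (B l k * v k))) by (intros; ring).
rewrite rsum_plus, rsum_opp. ring.
Qed.

Definition LI_prop := forall (N : nat) (E : nat -> nat -> R), ~ is_eigenvalue N E 1 ->
  exists P : nat -> nat -> R, forall (x : nat -> R) i, (i < N)%nat ->
    rsum N (fun j => P i j * (x j - rsum N (fun l => E j l * x l))) = x i.

Theorem main (LI : LI_prop) (N : nat) (A B : nat -> nat -> R) (T : R) (hT : 0 < T) :
  (forall E : nat -> nat -> R,
     is_expm N (fun i j => T * (A i j + B i j)) E -> ~ is_eigenvalue N E 1) ->
  exists tau0 : R, 0 < tau0 /\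
    forall tau : R, 0 < tau < tau0 ->
      ~ (exists u : R -> nat -> R,
           solves_dde N A B tau u /\ periodic N T u /\ nontrivial N u).
Proof.
intros H.
set (M := fun i j => A i j + B i j).
set (E := fun i j => Phi N M T i j).
assert (HE : ~ is_eigenvalue N E 1) by (apply H; exact (Phi_expm N M T)).
destruct (LI N E HE) as [P HP].
destruct (Phi_bound N M T (Rlt_le _ _ hT)) as [Kf HKf].
set (K := Rabs Kf).
assert (HK : forall i j r, (i < N)%nat -> (j < N)%nat -> 0 <= r <= T -> Rabs (Phi N M r i j) <= K).
{ intros. eapply Rle_trans. apply HKf; auto. apply RRle_abs. }
assert (K0 : 0 <= K) by apply Rabs_pos.
set (mA := mbound N A). set (mB := mbound N B). set (mP := mbound N P).
assert (mA0 : 0 <= mA) by apply mbound_pos.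
assert (mB0 : 0 <= mB) by apply mbound_pos.
assert (mP0 : 0 <= mP) by apply mbound_pos.
set (nN := INR N). assert (nN0 : 0 <= nN) by apply pos_INR.
set (D := nN * mA + nN * mB).
assert (D0 : 0 <= D) by (unfold D; apply Rplus_le_le_0_compat; apply Rmult_le_pos; auto).
set (Q := nN * mP * (T * (nN * (K * (nN * (mB * D)))))).
assert (Q0 : 0 <= Q).
{ unfold Q. repeat (apply Rmult_le_pos; auto); lra. }
exists (/ (Q + 1)). split. apply Rinv_0_lt_compat; lra.
intros tau Htau [u [Hs [Hp Hnt]]].
destruct Hnt as [t1 [i1 [Hi1 Hne]]].
assert (Qt : Q * tau < 1).
{ destruct Htau as [Ht1 Ht2].
  apply (Rmult_lt_compat_l (Q + 1)) in Ht2; [|lra].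
  rewrite Rinv_r in Ht2 by lra. nra. }
assert (Hcont : forall j s, (j < N)%nat -> continuity_pt (fun r => u r j) s).
{ intros j s Hj. apply derivable_continuous_pt. eexists. apply Hs; auto. }
destruct (argmax_finite N (fun j s => Rabs (u s j)) ltac:(lia)) as [j0 [t0 [Hj0 Hmax]]].
{ intros j Hj.
  destruct (continuity_ab_maj (fun r => Rabs (u r j)) 0 T (Rlt_le _ _ hT)) as [x [Hx _]].
  - intros r _. exact (continuity_pt_comp (fun r => u r j) Rabs r (Hcont j r Hj) (Rcontinuity_abs _)).
  - exists x. intros s. destruct (periodic_reduce N T u hT Hp s) as [s' [Hs' Heq]].
    rewrite Heq by auto. apply Hx; auto. }
set (U := Rabs (u t0 j0)).
assert (U0 : 0 <= U) by apply Rabs_pos.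
assert (HU : forall s k, (k < N)%nat -> Rabs (u s k) <= U) by (intros; apply Hmax; auto).
assert (Hder : forall s k, (k < N)%nat ->
  Rabs (rsum N (fun j => A k j * u s j) + rsum N (fun j => B k j * u (s - tau) j)) <= D * U).
{ intros s k Hk. eapply Rle_trans. apply Rabs_triang.
  replace (D * U) with (nN * (mA * U) + nN * (mB * U)) by (unfold D; ring).
  apply Rplus_le_compat; apply rsum_bound; intros j Hj; apply abs_mult_le; auto; apply mbound_ok; auto. }
assert (Hdiff : forall s k, (k < N)%nat -> Rabs (u (s - tau) k - u s k) <= tau * (D * U)).
{ intros s k Hk.
  destruct (MVT_cor2 (fun r => u r k) (fun r => rsum N (fun j => A k j * u r j) + rsum N (fun j => B k j * u (r - tau) j)) (s - tau) s) as [c [Hc _]].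
  lra. intros c _. apply Hs; auto.
  rewrite Rabs_minus_sym. simpl in Hc. rewrite Hc. rewrite Rabs_mult.
  replace (s - (s - tau)) with tau by ring. rewrite (Rabs_right tau) by lra.
  rewrite Rmult_comm. apply Rmult_le_compat_l. lra. apply Hder; auto. }
assert (Hy : forall i, (i < N)%nat ->
  Rabs (u t0 i - rsum N (fun l => E i l * u t0 l)) <= T * (nN * (K * (nN * (mB * (tau * (D * U))))))).
{ intros i Hi.
  set (g := fun s => rsum N (fun l => Phi N M (T - s) i l * u (t0 + s) l)).
  set (g' := fun s => rsum N (fun l =>
     (rsum N (fun k => A l k * u (t0 + s) k) + rsum N (fun k => B l k * u (t0 + s - tau) k)) * Phi N M (T - s) i l
     + (rsum N (fun k => Phi N M (T - s) i k * M k l) * -1) * u (t0 + s) l)).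
  assert (Hg : forall s, derivable_pt_lim g s (g' s)).
  { intros s. unfold g, g'.
    apply (derive_rsum N (fun l s => Phi N M (T - s) i l * u (t0 + s) l)
      (fun l s => (rsum N (fun k => A l k * u (t0 + s) k) + rsum N (fun k => B l k * u (t0 + s - tau) k)) * Phi N M (T - s) i l
     + (rsum N (fun k => Phi N M (T - s) i k * M k l) * -1) * u (t0 + s) l)).
    intros l Hl. cbv beta.
    match goal with |- derivable_pt_lim _ _ (?a * ?b + ?c * ?d) => replace (a*b + c*d) with (c*d + b*a) by ring end.
    apply (derivable_pt_lim_mult (fun s => Phi N M (T - s) i l) (fun s => u (t0 + s) l)).
    - apply (deriv_refl (fun r => Phi N M r i l)). apply Phi_deriv; auto.
    - apply (deriv_shift (fun r => u r l)). apply Hs; auto. }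
  destruct (MVT_cor2 g g' 0 T hT (fun c _ => Hg c)) as [c [Hc Hc2]].
  assert (HgT : g T = u t0 i).
  { unfold g. rewrite <- (rsum_idmat N i (fun l => u t0 l) Hi). apply rsum_ext. intros l Hl.
    replace (T - T) with 0 by ring. rewrite Phi_0, Hp; auto. }
  assert (Hg0 : g 0 = rsum N (fun l => E i l * u t0 l)).
  { unfold g, E. apply rsum_ext. intros l Hl. rewrite Rminus_0_r, Rplus_0_r. auto. }
  rewrite <- HgT, <- Hg0, Hc, Rminus_0_r, Rabs_mult, (Rabs_right T) by lra.
  rewrite Rmult_comm. apply Rmult_le_compat_l; [lra|].
  assert (Heq : g' c = rsum N (fun l => Phi N M (T - c) i l * rsum N (fun k => B l k * (u (t0 + c - tau) k - u (t0 + c) k))))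
    by (unfold g'; exact (gprime_simpl N (fun l => Phi N M (T - c) i l) A B (fun k => u (t0 + c) k) (fun k => u (t0 + c - tau) k))).
  rewrite Heq.
  apply rsum_bound. intros l Hl. apply abs_mult_le.
  - apply HK; auto. lra.
  - apply rsum_bound. intros k Hk. apply abs_mult_le. apply mbound_ok; auto. apply Hdiff; auto. }
assert (HUb : U <= Q * tau * U).
{ apply Rle_trans with (Rabs (rsum N (fun j => P j0 j * (u t0 j - rsum N (fun l => E j l * u t0 l))))).
  { right. unfold U. rewrite (HP (fun l => u t0 l) j0 Hj0). auto. }
  eapply Rle_trans. apply rsum_bound with (b := mP * (T * (nN * (K * (nN * (mB * (tau * (D * U)))))))).
  intros j Hj. apply abs_mult_le. apply mbound_ok; auto. apply Hy; auto.
  unfold Q, nN. right. ring. }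
assert (U <= 0) by nra.
assert (Rabs (u t1 i1) <= 0) by (eapply Rle_trans; [apply HU; auto| auto]).
apply Hne. assert (Rabs (u t1 i1) = 0) by (apply Rle_antisym; auto; apply Rabs_pos).
apply Rabs_eq_0 in H2; auto.
Qed.
Module LA.
From mathcomp Require Import all_boot all_algebra.
From mathcomp Require Import Rstruct.
Import GRing.Theory.
Local Open Scope ring_scope.

Lemma rsum_big n (f : nat -> R) : rsum n f = \sum_(j < n) f j.
Proof.
elim: n => [|n IH] /=; first by rewrite big_ord0.
by rewrite big_ord_recr /= IH.
Qed.

Lemma left_inv : LI_prop.
Proof.
move=> N E.
case: N => [|n] Hn; first by exists (fun _ _ => 0) => x i /ltP.
set C : 'M[R]_n.+1 := \matrix_(i, j) ((if (i:nat) == j then 1 else 0) - E i j).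
have HC : C \in unitmx.
  rewrite unitmxE unitfE; apply/negP => /eqP H0.
  have /det0P [v Hv0 Hv] : \det C^T == 0 by rewrite det_tr H0.
  apply: Hn; exists (fun j => if (j < n.+1)%nat then v ord0 (inord j) else 0).
  split.
    have [k Hk] : exists k, v ord0 k != 0.
      apply/existsP; move: Hv0; apply: contraR; rewrite negb_exists => /forallP H.
      by apply/eqP/rowP => k; rewrite mxE; move: (H k); rewrite negbK => /eqP.
    exists k; split; first by apply/ltP; exact: ltn_ord.
    by rewrite ltn_ord inord_val; apply/eqP.
  move=> i /ltP Hi.
  rewrite rsum_big Hi Rmult_1_l.
  under eq_bigr => j _ do rewrite ltn_ord inord_val.
  have := congr1 (fun M : 'M[R]_(1,n.+1) => M ord0 (inord i)) Hv => /= H.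
  rewrite !mxE in H.
  have H' : \sum_(j < n.+1) (v ord0 j * (if i == j then 1 else 0) - v ord0 j * E i j) = 0.
    by apply: (eq_trans _ H); apply: eq_bigr => j _; rewrite !mxE inordK // mulrBr.
  move: H'; rewrite sumrB (bigD1 (inord i)) //= inordK // eqxx mulr1.
  rewrite big1; last first.
    move=> j /negP Hj; case: eqP => Hji; last by rewrite mulr0.
    exfalso; apply: Hj; apply/eqP/val_inj; by rewrite /= inordK // Hji.
  move=> H2.
  have -> : \sum_(j<n.+1) (E i j * v ord0 j)%R = \sum_(i0 < n.+1) v ord0 i0 * E i i0.
    by apply: eq_bigr => j _; apply: mulrC.
  by move/eqP: H2; rewrite addr0 subr_eq0 => /eqP <-.
exists (fun i j => invmx C (inord i) (inord j)) => x i /ltP Hi.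
have HP := mulVmx HC.
rewrite rsum_big.
have Hrow : forall j : 'I_n.+1, (x j - rsum n.+1 (fun l => E j l * x l))%R
   = \sum_(l < n.+1) C j l * x l.
  move=> j; rewrite rsum_big.
  under [RHS]eq_bigr => l _ do rewrite mxE mulrBl.
  rewrite sumrB; congr (_ - _).
  rewrite (bigD1 j) //= eqxx mul1r big1 ?addr0 //.
  by move=> l Hl; case: eqP => [/val_inj Hjl|]; [rewrite Hjl eqxx in Hl | rewrite mul0r].
transitivity (\sum_(j < n.+1) invmx C (inord i) j * \sum_(l < n.+1) C j l * x l).
  by apply: eq_bigr => j _; rewrite inord_val -Hrow.
under eq_bigr => j _ do rewrite big_distrr /=.
rewrite exchange_big /=.
have Hl : forall l : 'I_n.+1, \sum_(j < n.+1) invmx C (inord i) j * (C j l * x l)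
   = (invmx C *m C) (inord i) l * x l.
  by move=> l; rewrite mxE big_distrl; apply: eq_bigr => j _; rewrite mulrA.
under eq_bigr => l _ do rewrite Hl HP mxE.
rewrite (bigD1 (inord i)) //= eqxx mul1r big1 ?addr0 ?inordK //.
by move=> l Hl'; rewrite eq_sym (negbTE Hl') mul0r.
Qed.
End LA.

Theorem lemma3 (N : nat) (A B : nat -> nat -> R) (T : R) (hT : 0 < T) :
  (forall E : nat -> nat -> R,
     is_expm N (fun i j => T * (A i j + B i j)) E -> ~ is_eigenvalue N E 1) ->
  exists tau0 : R, 0 < tau0 /\
    forall tau : R, 0 < tau < tau0 ->
      ~ (exists u : R -> nat -> R,
           solves_dde N A B tau u /\ periodic N T u /\ nontrivial N u).
Proof.
exact (main LA.left_inv N A B T hT).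
Qed.
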